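(* For any $\lambda\in[0,1)$: $\mathbb{L}^{=1}(\mathrm{QBA}|\mathrm{D})\not\subseteq\mathbb{L}^{>\lambda}(\mathrm{QBA}|\mathrm{D})$.
   Context: A quantum automaton is a tuple $\mathcal{A}=(\mathcal{H},|s_0\rangle,\Sigma,\{U_\sigma:\sigma\in\Sigma\},F)$ where $\mathcal{H}$ is a finite-dimensional complex Hilbert space, $|s_0\rangle$ a unit vector, $\Sigma$ a finite alphabet, each $U_\sigma$ unitary, and $F$ a subspace. For $w=\sigma_1\sigma_2\cdots\in\Sigma^\omega$, a unit vector $|\psi\rangle\in F$ and checkpoints $0\le n_1<n_2<\cdots$, the disturbing run is $|s_0\rangle$ (initial state) and for $n\ge1$: $|s_n\rangle=U_{\sigma_n}|\psi\rangle$ if $n-1=n_i$ for some $i$, else $|s_n\rangle=U_{\sigma_n}|s_{n-1}\rangle$. Then $f^{\mathrm{D}}_{\mathcal{A}}(w)=\sup_{|\psi\rangle}\sup_{\{n_i\}}\inf_{i\ge1}|\langle\psi|s_{n_i}\rangle|^2$ over unit $|\psi\rangle\in F$ and strictly increasing checkpoint sequences. $\mathcal{L}^{=1}(\mathcal{A}|\mathrm{D})=\{w\in\Sigma^\omega:f^{\mathrm{D}}_{\mathcal{A}}(w)=1\}$, $\mathcal{L}^{>\lambda}(\mathcal{A}|\mathrm{D})=\{w:f^{\mathrm{D}}_{\mathcal{A}}(w)>\lambda\}$; $\mathbb{L}^{=1}(\mathrm{QBA}|\mathrm{D})$ and $\mathbb{L}^{>\lambda}(\mathrm{QBA}|\mathrm{D})$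 are the classes of all such languages as $\mathcal{A}$ ranges over all quantum automata. *)

(* Defs.v *)
From HB Require Import structures.
From mathcomp Require Import all_boot all_order all_algebra.
From mathcomp Require Import boolp classical_sets reals.
From mathcomp Require Import complex.
Set Implicit Arguments. Unset Strict Implicit. Unset Printing Implicit Defensive.
Import Order.TTheory GRing.Theory Num.Theory.
Local Open Scope ring_scope.
Local Open Scope classical_set_scope.

Section QA.
Variable R : realType.
Local Notation C := (complex R).

Definition sqmod (z : C) : R := (complex.Re z) ^+ 2 + (complex.Im z) ^+ 2.

Definition adjmx m n (A : 'M[C]_(m, n)) : 'M[C]_(n, m) := (map_mx (@conjc R) A)^T.

Definition inner n (phi psi : 'cV[C]_n) : C :=
  \sum_(i < n) conjc (phi i ord0) * psi i ord0.

Definition sqnorm n (v : 'cV[C]_n) : R := \sum_(i < n) sqmod (v i ord0).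

(* A quantum automaton over the finite alphabet Sigma: Hilbert space C^dim,
   initial unit vector s0, unitaries U_sigma, and a subspace F given as the
   row space of a matrix (a column vector v lies in F iff v^T is in the row
   space of qa_F). *)
Record qautomaton (Sigma : finType) := QAut {
  qa_dim : nat;
  qa_s0 : 'cV[C]_qa_dim;
  qa_U : Sigma -> 'M[C]_qa_dim;
  qa_F : 'M[C]_qa_dim;
  qa_s0_unit : sqnorm qa_s0 = 1;
  qa_U_unitary : forall a, adjmx (qa_U a) *m qa_U a = 1%:M
}.

Definition inF (Sigma : finType) (A : qautomaton Sigma) (v : 'cV[C]_(qa_dim A)) : Prop :=
  (v^T <= qa_F A)%MS.

(* The disturbing run on w = sigma_1 sigma_2 ... (w k = sigma_{k+1}),
   with reset vector psi and checkpoints ns 0 < ns 1 < ... (ns i = n_{i+1}):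
   s_0 = s0 ; s_{k+1} = U_{w k} psi if k is a checkpoint, else U_{w k} s_k. *)
Fixpoint drun (Sigma : finType) (A : qautomaton Sigma) (w : nat -> Sigma)
  (psi : 'cV[C]_(qa_dim A)) (ns : nat -> nat) (k : nat) : 'cV[C]_(qa_dim A) :=
  match k with
  | 0 => qa_s0 A
  | k'.+1 => qa_U A (w k') *m
             (if `[< exists i, ns i = k' >] then psi else @drun Sigma A w psi ns k')
  end.

Arguments drun {Sigma} A w psi ns k.

Definition strict_incr (ns : nat -> nat) : Prop := forall i, (ns i < ns i.+1)%N.

Definition fD (Sigma : finType) (A : qautomaton Sigma) (w : nat -> Sigma) : R :=
  sup [set x : R | exists (psi : 'cV[C]_(qa_dim A)) (ns : nat -> nat),
        [/\ sqnorm psi = 1, inF psi, strict_incr ns &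
            x = inf (range (fun i => sqmod (inner psi (drun A w psi ns (ns i)))))]].

Definition lang_eq1 (Sigma : finType) (A : qautomaton Sigma) : set (nat -> Sigma) :=
  [set w | fD A w = 1].

Definition lang_gt (Sigma : finType) (lam : R) (A : qautomaton Sigma) : set (nat -> Sigma) :=
  [set w | lam < fD A w].

End QA.

(* Main.v *)
Require Import Defs.
From HB Require Import structures.
From mathcomp Require Import all_boot all_order all_algebra.
From mathcomp Require Import boolp classical_sets reals.
From mathcomp Require Import complex.
From mathcomp Require Import ring lra zify.
Import Order.TTheory GRing.Theory Num.Theory.
Local Open Scope ring_scope.
Local Open Scope complex_scope.
Local Open Scope classical_set_scope.
Set Implicit Arguments. Unset Strict Implicit. Unset Printing Implicit Defensive.

Section Aux.
Variable R : realType.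
Local Notation C := (complex R).
Local Notation Re := (@complex.Re R).
Local Notation Im := (@complex.Im R).

Lemma ReM (x y : C) : Re (x * y) = Re x * Re y - Im x * Im y.
Proof. by case: x => ? ?; case: y => ? ?. Qed.
Lemma ImM (x y : C) : Im (x * y) = Re x * Im y + Im x * Re y.
Proof. by case: x => ? ?; case: y => ? ?. Qed.
Lemma ReD (x y : C) : Re (x + y) = Re x + Re y.
Proof. by case: x => ? ?; case: y => ? ?. Qed.
Lemma ImD (x y : C) : Im (x + y) = Im x + Im y.
Proof. by case: x => ? ?; case: y => ? ?. Qed.
Lemma ReN (x : C) : Re (- x) = - Re x.
Proof. by case: x => ? ?. Qed.
Lemma ImN (x : C) : Im (- x) = - Im x.
Proof. by case: x => ? ?. Qed.
Lemma ReJ (x : C) : Re (conjc x) = Re x.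
Proof. by case: x => ? ?. Qed.
Lemma ImJ (x : C) : Im (conjc x) = - Im x.
Proof. by case: x => ? ?. Qed.
Lemma Re0 : Re 0 = 0. Proof. by []. Qed.
Lemma Im0 : Im 0 = 0. Proof. by []. Qed.
Lemma ReR (r : R) : Re r%:C = r. Proof. by []. Qed.
Lemma ImR (r : R) : Im r%:C = 0. Proof. by []. Qed.

Lemma sqmod_ge0 (x : C) : 0 <= sqmod x.
Proof. by rewrite /sqmod addr_ge0 // sqr_ge0. Qed.

Lemma sqmodM (x y : C) : sqmod (x * y) = sqmod x * sqmod y.
Proof. rewrite /sqmod ReM ImM; ring. Qed.

Lemma sqmodJ (x : C) : sqmod (conjc x) = sqmod x.
Proof. rewrite /sqmod ReJ ImJ; ring. Qed.

Lemma sqmod0 : sqmod (0 : C) = 0.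
Proof. by rewrite /sqmod Re0 Im0 expr0n /= addr0. Qed.

Lemma conjM_self (x : C) : conjc x * x = (sqmod x)%:C.
Proof.
case: x => a b; rewrite /sqmod /=; apply/eqP; rewrite eq_complex; apply/andP; split; apply/eqP.
  by rewrite ReM /=; ring.
by rewrite ImM /=; ring.
Qed.

Lemma sqmodD2 (x y : C) : sqmod (x + y) <= 2 * (sqmod x + sqmod y).
Proof.
rewrite /sqmod ReD ImD -subr_ge0.
have -> : 2 * (Re x ^+ 2 + Im x ^+ 2 + (Re y ^+ 2 + Im y ^+ 2)) -
   ((Re x + Re y) ^+ 2 + (Im x + Im y) ^+ 2) = (Re x - Re y)^+2 + (Im x - Im y)^+2 by ring.
by rewrite addr_ge0 // sqr_ge0.
Qed.

Lemma adjmxM m n p (A : 'M[C]_(m, n)) (B : 'M[C]_(n, p)) :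
  adjmx (A *m B) = adjmx B *m adjmx A.
Proof. by rewrite /adjmx map_mxM trmx_mul. Qed.

Lemma sqnormE n (v : 'cV[C]_n) : (adjmx v *m v) 0 0 = (sqnorm v)%:C.
Proof.
rewrite /sqnorm mxE rmorph_sum /=; apply: eq_bigr => i _.
by rewrite /adjmx !mxE conjM_self.
Qed.

Lemma unitary_sqnorm n (U : 'M[C]_n) (v : 'cV[C]_n) :
  adjmx U *m U = 1%:M -> sqnorm (U *m v) = sqnorm v.
Proof.
move=> hU; apply: complexI; rewrite -!sqnormE adjmxM -mulmxA (mulmxA (adjmx U)) hU.
by rewrite mul1mx.
Qed.


Section Run.
Variables (Sigma : finType) (A : qautomaton R Sigma).

Fixpoint run (w : nat -> Sigma) (k : nat) : 'cV[C]_(qa_dim A) :=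
  match k with 0 => qa_s0 A | k'.+1 => qa_U A (w k') *m run w k' end.

Lemma run_ext (w w' : nat -> Sigma) k :
  (forall t, (t < k)%N -> w t = w' t) -> run w k = run w' k.
Proof.
elim: k => [//|k IH] H /=; rewrite H // IH // => t tk; apply: H; exact: ltnW.
Qed.

Lemma drun_pre w psi ns k :
  (forall i, (k <= ns i)%N) -> drun (A:=A) w psi ns k = run w k.
Proof.
elim: k => [//|k IH] H /=.
have -> : `[< exists i, ns i = k >] = false.
  apply/asboolP => -[i hi]; move: (H i); rewrite hi ltnn //.
by rewrite IH // => i; apply: ltnW; apply: H.
Qed.

Lemma drun_unit w psi ns k : sqnorm psi = 1 -> sqnorm (drun (A:=A) w psi ns k) = 1.
Proof.
move=> hpsi; elim: k => [|k IH] /=; first exact: qa_s0_unit.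
rewrite unitary_sqnorm; last exact: qa_U_unitary.
by case: ifP.
Qed.

Lemma strict_incr_ge ns : strict_incr ns -> forall i, (ns 0 <= ns i)%N.
Proof.
move=> h; elim=> [//|i IH]; apply: (leq_trans IH); exact: ltnW.
Qed.

Lemma strict_incr_lin n0 m : (0 < m)%N -> strict_incr (fun i => n0 + m * i)%N.
Proof. by move=> hm i /=; rewrite ltn_add2l mulnS -{1}(add0n (m * i)%N) ltn_add2r. Qed.

Lemma drun_block w psi n0 m y i t :
  (0 < m)%N -> (forall k, (n0 <= k)%N -> w k = y) -> (0 < t <= m)%N ->
  drun (A:=A) w psi (fun i => n0 + m * i)%N (n0 + m * i + t)%N = iter t (mulmx (qa_U A y)) psi.
Proof.
move=> hm hw; elim: t => [//|t IH] /andP [_ htm].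
rewrite addnS /= hw; last by rewrite -addnA leq_addr.
case: (posnP t) => [->|tpos].
  rewrite addn0.
  have -> : `[< exists j, (n0 + m * j)%N = (n0 + m * i)%N >] = true by apply/asboolP; exists i.
  by [].
have -> : `[< exists j, (n0 + m * j)%N = (n0 + m * i + t)%N >] = false.
  apply/asboolP => -[j]; rewrite -addnA => /eqP; rewrite eqn_add2l => /eqP hj.
  case: (leqP j i) => hji.
    have : (m * j <= m * i)%N by rewrite leq_mul2l hji orbT.
    lia.
  have : (m * i.+1 <= m * j)%N by rewrite leq_mul2l hji orbT.
  rewrite mulnS; lia.
rewrite IH //; last by rewrite tpos ltnW.
Qed.

End Run.

Lemma Re_sum n (c : 'I_n -> C) : Re (\sum_(i < n) c i) = \sum_(i < n) Re (c i).
Proof. exact: (big_morph Re ReD Re0). Qed.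

Lemma sqmod_sum n (c : 'I_n -> C) :
  sqmod (\sum_(i < n) c i) <= 2 ^+ n * \sum_(i < n) sqmod (c i).
Proof.
elim: n c => [|n IH] c.
  by rewrite !big_ord0 sqmod0 mulr0.
rewrite !big_ord_recr /=.
apply: (le_trans (sqmodD2 _ _)).
have h1 := IH (fun i => c (widen_ord (leqnSn n) i)).
have h2 : 1 <= 2 ^+ n :> R by rewrite exprn_ege1 // ler1n.
have h3 := sqmod_ge0 (c ord_max).
rewrite exprS -mulrA ler_wpM2l // mulrDr lerD //.
by rewrite -[X in X <= _]mul1r ler_wpM2r.
Qed.

Lemma sqmod_le_sqnorm n (v : 'cV[C]_n) i : sqmod (v i 0) <= sqnorm v.
Proof.
rewrite /sqnorm (bigD1 i) //= lerDl sumr_ge0 // => j _; exact: sqmod_ge0.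
Qed.

Lemma inner_bound n (p s : 'cV[C]_n) :
  sqnorm p = 1 -> sqnorm s = 1 -> sqmod (inner p s) <= 2 ^+ n * n%:R.
Proof.
move=> hp hs; apply: (le_trans (sqmod_sum _)).
rewrite ler_wpM2l ?exprn_ge0 //.
apply: (@le_trans _ _ (\sum_(i < n) (1 : R))); last by rewrite sumr_const card_ord.
apply: ler_sum => i _; rewrite sqmodM sqmodJ.
have := sqmod_le_sqnorm p i; have := sqmod_le_sqnorm s i; rewrite hp hs => h1 h2.
by rewrite -[1]mulr1 ler_pM // sqmod_ge0.
Qed.

Lemma fid_lower n (p u : 'cV[C]_n) :
  sqnorm p = 1 -> sqnorm u = 1 -> 1 - sqnorm (u - p) <= sqmod (inner p u).
Proof.
move=> hp hu.
have key : sqnorm (u - p) = 2 - 2 * Re (inner p u).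
  have -> : (2 : R) - 2 * Re (inner p u) = sqnorm u + sqnorm p - 2 * Re (inner p u) by rewrite hp hu.
  rewrite /inner Re_sum.
  rewrite /sqnorm mulr_sumr -!big_split /= -sumrB; apply: eq_bigr => i _.
  rewrite !mxE /sqmod ?ReM ?ImM ?ReJ ?ImJ ?ReD ?ImD ?ReN ?ImN; ring.
rewrite key /sqmod.
set r := Re (inner p u).
have : 0 <= (Im (inner p u)) ^+ 2 by rewrite sqr_ge0.
have : 0 <= (1 - r) ^+ 2 by rewrite sqr_ge0.
nra.
Qed.


Lemma cell_close (M : nat) (r1 r2 : R) : (0 < M)%N ->
  -1 <= r1 <= 1 -> -1 <= r2 <= 1 ->
  (inord (Num.truncn ((r1 + 1) * M%:R)) : 'I_(2 * M).+1) =
    inord (Num.truncn ((r2 + 1) * M%:R)) ->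
  (r1 - r2) ^+ 2 <= M%:R ^-2.
Proof.
move=> M0 /andP [h1 h1'] /andP [h2 h2'] heq.
have Mpos : 0 < M%:R :> R by rewrite ltr0n.
set a := (r1 + 1) * M%:R; set b := (r2 + 1) * M%:R.
have a0 : 0 <= a by rewrite /a mulr_ge0 // ?ler0n // -lerBlDr sub0r.
have b0 : 0 <= b by rewrite /b mulr_ge0 // ?ler0n // -lerBlDr sub0r.
have aM : (Num.truncn a < (2 * M).+1)%N.
  rewrite ltnS truncn_le_nat -addn1 natrD natrM.
  have H : (r1 + 1) * M%:R <= 2%:R * M%:R by rewrite ler_wpM2r ?ler0n //; lra.
  by apply: (le_lt_trans H); rewrite ltrDl ltr01.
have bM : (Num.truncn b < (2 * M).+1)%N.
  rewrite ltnS truncn_le_nat -addn1 natrD natrM.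
  have H : (r2 + 1) * M%:R <= 2%:R * M%:R by rewrite ler_wpM2r ?ler0n //; lra.
  by apply: (le_lt_trans H); rewrite ltrDl ltr01.
have ht : Num.truncn a = Num.truncn b.
  by move/(congr1 val): heq; rewrite /= !inordK.
have := truncn_itv a0; have := truncn_itv b0; rewrite ht.
set t := (Num.truncn b)%:R => /andP [tb bt] /andP [ta at_].
have hab : (a - b) ^+ 2 <= 1.
  have : -1 < a - b < 1 by apply/andP; split; lra.
  move=> /andP [l u]. nra.
have -> : (r1 - r2) ^+ 2 = (a - b) ^+ 2 * M%:R ^-2.
  rewrite /a /b; field; by rewrite pnatr_eq0 -lt0n.
by rewrite -[X in _ <= X]mul1r ler_wpM2r // invr_ge0 exprn_ge0 // ler0n.
Qed.


Lemma iter_unit n (V : 'M[C]_n) (x : 'cV[C]_n) k :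
  adjmx V *m V = 1%:M -> sqnorm (iter k (mulmx V) x) = sqnorm x.
Proof. by move=> hV; elim: k => [//|k IH] /=; rewrite unitary_sqnorm. Qed.

Lemma iter_sub n (V : 'M[C]_n) (x y : 'cV[C]_n) k :
  iter k (mulmx V) (x - y) = iter k (mulmx V) x - iter k (mulmx V) y.
Proof. by elim: k => [//|k IH] /=; rewrite IH mulmxBr. Qed.

Lemma comp_bound n (v : 'cV[C]_n) i : sqnorm v = 1 ->
  -1 <= Re (v i 0) <= 1 /\ -1 <= Im (v i 0) <= 1.
Proof.
move=> hv; have := sqmod_le_sqnorm v i; rewrite hv /sqmod => h.
have h1 := sqr_ge0 (Re (v i 0)); have h2 := sqr_ge0 (Im (v i 0)).
split; apply/andP; split; nra.
Qed.

Lemma dirichlet n (V : 'M[C]_n) (psi : 'cV[C]_n) (delta : R) :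
  adjmx V *m V = 1%:M -> sqnorm psi = 1 -> 0 < delta ->
  exists m, (0 < m)%N /\ 1 - delta <= sqmod (inner psi (iter m (mulmx V) psi)).
Proof.
move=> hV hpsi dpos.
pose v k := iter k (mulmx V) psi.
have vunit k : sqnorm (v k) = 1 by rewrite /v iter_unit.
pose M := (Num.truncn (2 * n%:R / delta)).+1.
have M0 : (0 < M)%N by [].
pose cell (r : R) : 'I_(2 * M).+1 := inord (Num.truncn ((r + 1) * M%:R)).
pose code (k : nat) : {ffun 'I_n * bool -> 'I_(2 * M).+1} :=
  [ffun pb => cell (if pb.2 then Re (v k pb.1 0) else Im (v k pb.1 0))].
pose N := #|{ffun 'I_n * bool -> 'I_(2 * M).+1}|.+1.
pose f (k : 'I_N) := code k.
have : ~~ injectiveb f.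
  apply/injectiveP => /leq_card; rewrite card_ord /N ltnn //.
case/injectivePn => k1 [k2 neq12 feq].
wlog lt12 : k1 k2 neq12 feq / (k1 < k2)%N.
  move=> W; case: (ltngtP k1 k2) => h.
  - exact: (W k1 k2).
  - by apply: (W k2 k1) => //; rewrite eq_sym.
  - by move/ord_inj: h => h; rewrite h eqxx in neq12.
exists (k2 - k1)%N; split; first by rewrite subn_gt0.
set m := (k2 - k1)%N.
have hk2 : v k2 = iter k1 (mulmx V) (v m).
  by rewrite /v -iterD addnC subnK // ltnW.
have hdist : sqnorm (v m - psi) = sqnorm (v k2 - v k1).
  by rewrite hk2 /v -iter_sub iter_unit.
have hsmall : sqnorm (v k2 - v k1) <= 2 * n%:R * M%:R ^-2.
  rewrite /sqnorm.
  apply: (@le_trans _ _ (\sum_(i < n) (2 * M%:R ^-2))); last first.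
    by rewrite sumr_const card_ord -[_ *+ n]mulr_natr mulrAC lexx.
  apply: ler_sum => i _.
  have e1 : cell (Re (v k2 i 0)) = cell (Re (v k1 i 0)).
    by have := congr1 (fun g : {ffun 'I_n * bool -> 'I_(2 * M).+1} => g (i, true)) feq; rewrite /f /code !ffunE.
  have e2 : cell (Im (v k2 i 0)) = cell (Im (v k1 i 0)).
    by have := congr1 (fun g : {ffun 'I_n * bool -> 'I_(2 * M).+1} => g (i, false)) feq; rewrite /f /code !ffunE.
  have [b1 b1'] := comp_bound i (vunit k1).
  have [b2 b2'] := comp_bound i (vunit k2).
  have c1 := cell_close M0 b2 b1 e1.
  have c2 := cell_close M0 b2' b1' e2.
  rewrite !mxE /sqmod ReD ImD ReN ImN.
  have -> : (2 : R) / M%:R ^+ 2 = M%:R ^-2 + M%:R ^-2 by field; rewrite pnatr_eq0 -lt0n.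
  exact: lerD.
have Mbig : 2 * n%:R / delta < M%:R.
  have h0 : 0 <= 2 * n%:R / delta by rewrite divr_ge0 ?mulr_ge0 ?ler0n // ltW.
  by have := truncn_itv h0 => /andP [_].
have Mpos : 0 < M%:R :> R by rewrite ltr0n.
have Mge1 : 1 <= M%:R :> R by rewrite ler1n.
have hb : 2 * n%:R * M%:R ^-2 <= delta.
  have h2n : 0 <= 2 * n%:R :> R by rewrite mulr_ge0 ?ler0n.
  have : 2 * n%:R <= delta * M%:R by rewrite [delta * _]mulrC -ler_pdivrMr // ltW.
  move=> H.
  have : 2 * n%:R * M%:R ^-2 <= delta * M%:R * M%:R ^-2.
    by rewrite ler_wpM2r // invr_ge0 exprn_ge0 // ltW.
  move/le_trans; apply.
  have -> : delta * M%:R * M%:R ^-2 = delta / M%:R by field; rewrite gt_eqF.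
  rewrite ler_pdivrMr // ler_peMr // ltW //.
have := fid_lower hpsi (vunit m).
rewrite hdist => H; apply: le_trans H.
by rewrite lerD2l lerN2; apply: le_trans hsmall hb.
Qed.


Lemma sum2 (F : 'I_2 -> C) : \sum_(i < 2) F i = F ord0 + F ord_max.
Proof.
rewrite big_ord_recr big_ord_recr big_ord0 /= add0r.
by congr (F _ + F _); apply: val_inj.
Qed.

Lemma sum2R (F : 'I_2 -> R) : \sum_(i < 2) F i = F ord0 + F ord_max.
Proof.
rewrite big_ord_recr big_ord_recr big_ord0 /= add0r.
by congr (F _ + F _); apply: val_inj.
Qed.

Lemma ord2P (i : 'I_2) : i = ord0 \/ i = ord_max.
Proof. by case: i => [[|[|k]]] h; [left|right|]; try apply: val_inj. Qed.

Lemma sqmodR (r : R) : sqmod r%:C = r ^+ 2.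
Proof. by rewrite /sqmod /= expr0n /= addr0. Qed.

Definition c35 : C := (3 / 5 : R)%:C.
Definition c45 : C := (4 / 5 : R)%:C.

Definition Rm : 'M[C]_2 := \matrix_(i, j)
  if i == ord0 then (if j == ord0 then c35 else - c45) else (if j == ord0 then c45 else c35).

Definition e1 : 'cV[C]_2 := \col_i (if i == ord0 then 1 else 0).
Definition s0A : 'cV[C]_2 := \col_i (if i == ord0 then c35 else c45).

Fixpoint xy (j : nat) : R * R := match j with
  | 0 => (1, 0)
  | j'.+1 => let: (a, b) := xy j' in (3 / 5 * a - 4 / 5 * b, 4 / 5 * a + 3 / 5 * b) end.

Definition stv (j : nat) : 'cV[C]_2 :=
  \col_i (if i == ord0 then (xy j).1%:C else (xy j).2%:C).

Lemma Rm_stv j : Rm *m stv j = stv j.+1.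
Proof.
apply/matrixP => i k; rewrite !mxE sum2 !mxE /=.
case: (xy j) => a b /=.
rewrite /c35 /c45.
have om : (ord_max == ord0 :> 'I_2) = false by [].
case: (ord2P i) => ->; rewrite ?eqxx ?om /=;
  apply/eqP; rewrite eq_complex /= ?ReD ?ImD ?ReM ?ImM ?ReN ?ImN /=; apply/andP; split; apply/eqP; ring.
Qed.

Lemma stv0 : stv 0 = e1.
Proof. by apply/matrixP => i k; rewrite !mxE. Qed.

Lemma iter_stv j : iter j (mulmx Rm) e1 = stv j.
Proof. by elim: j => [|j IH] /=; rewrite ?stv0 // IH Rm_stv. Qed.

Lemma s0A_stv : s0A = stv 1.
Proof.
apply/matrixP => i k; rewrite !mxE /=.
case: (ord2P i) => -> //=; apply/eqP; rewrite eq_complex /= /c35 /c45; apply/andP; split; apply/eqP; ring.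
Qed.


Lemma Rm_unitary : adjmx Rm *m Rm = 1%:M.
Proof.
apply/matrixP => i j; rewrite !mxE sum2 /adjmx !mxE /c35 /c45.
have om : (ord_max == ord0 :> 'I_2) = false by [].
have om' : (ord0 == ord_max :> 'I_2) = false by [].
case: (ord2P i) => ->; case: (ord2P j) => -> /=; rewrite ?eqxx ?om ?om' /=;
  apply/eqP; rewrite eq_complex /= ?ReD ?ImD ?ReM ?ImM ?ReN ?ImN ?ReJ ?ImJ /=;
  apply/andP; split; apply/eqP; field.
all: by [].
Qed.

Lemma one_unitary n : adjmx (1%:M : 'M[C]_n) *m 1%:M = 1%:M.
Proof.
by rewrite /adjmx map_mx1 trmx1 mulmx1.
Qed.

Lemma s0A_unit : sqnorm s0A = 1.
Proof.
rewrite /sqnorm sum2R !mxE /= /c35 /c45 !sqmodR; by field.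
Qed.

Definition UA (b : bool) : 'M[C]_2 := if b then Rm else 1%:M.

Lemma UA_unitary b : adjmx (UA b) *m UA b = 1%:M.
Proof. by case: b; [exact: Rm_unitary | exact: one_unitary]. Qed.

Definition Aut : qautomaton R bool :=
  @QAut R bool 2 s0A UA (delta_mx ord0 ord0) s0A_unit UA_unitary.

Lemma inF_Aut (v : 'cV[C]_2) : inF (A:=Aut) v -> v ord_max 0 = 0.
Proof.
rewrite /inF /= => /submxP [D hD].
have := congr1 (fun M : 'M[C]_(1, 2) => M 0 ord_max) hD.
by rewrite /= !mxE sum2 !mxE /= !mulr0 addr0.
Qed.

Lemma inF_e1 : inF (A:=Aut) e1.
Proof.
rewrite /inF /=.
have -> : e1^T = e1^T *m delta_mx ord0 ord0.
  apply/matrixP => i j; rewrite !mxE sum2 !mxE /=.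
  by case: (ord2P j) => -> /=; rewrite ?mulr1 ?mulr0 ?addr0 ?add0r.
exact: submxMl.
Qed.

Lemma e1_unit : sqnorm e1 = 1.
Proof. by rewrite /sqnorm sum2R !mxE /= sqmod0 addr0 /sqmod /= expr0n /= addr0 expr1n. Qed.

Lemma fid_Aut (psi s : 'cV[C]_2) : inF (A:=Aut) psi -> sqnorm psi = 1 ->
  sqmod (inner psi s) = sqmod (s ord0 0).
Proof.
move=> hF hn; have h1 := inF_Aut hF.
move: hn; rewrite /sqnorm sum2R h1 sqmod0 addr0 => hn.
by rewrite /inner sum2 h1 conjc0 mul0r addr0 sqmodM sqmodJ hn mul1r.
Qed.


Lemma xy_int j : (0 < j)%N -> exists a b : int,
  (xy j).1 = (5 * a + 3)%:~R / 5 ^+ j /\ (xy j).2 = (5 * b + 4)%:~R / 5 ^+ j.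
Proof.
elim: j => [//|j IH] _.
case: (posnP j) => [->|jpos].
  by exists 0, 0; rewrite /= !mulr0 !subr0 !addr0 !add0r !expr1; split; field.
have [a [b [ha hb]]] := IH jpos.
exists (3 * a - 4 * b - 2), (4 * a + 3 * b + 4).
rewrite /=; move: ha hb; case: (xy j) => u v /= -> ->.
rewrite !exprS; split; rewrite !(rmorphD, rmorphM, rmorphB, rmorphN) /=; field;
  by rewrite expf_neq0 // pnatr_eq0.
Qed.

Lemma xy2_ne0 j : (0 < j)%N -> (xy j).2 != 0.
Proof.
move=> /xy_int [a [b [_ ->]]].
rewrite mulf_eq0 negb_or invr_eq0 expf_neq0 ?pnatr_eq0 // andbT intr_eq0.
apply/eqP; lia.
Qed.

Lemma stv_unit j : sqnorm (stv j) = 1.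
Proof. by rewrite -iter_stv iter_unit ?e1_unit // Rm_unitary. Qed.

Lemma xy_norm j : (xy j).1 ^+ 2 + (xy j).2 ^+ 2 = 1.
Proof.
by have := stv_unit j; rewrite /sqnorm sum2R !mxE /= !sqmodR.
Qed.

Lemma xy_bound K : exists d : R, 0 < d /\
  forall j, (0 < j <= K)%N -> (xy j).1 ^+ 2 <= 1 - d.
Proof.
elim: K => [|K [d [dpos hd]]].
  by exists 1; split => // j /andP [h1 h2]; move: (leq_trans h1 h2).
have hy := xy2_ne0 (ltn0Sn K).
have ypos : 0 < (xy K.+1).2 ^+ 2 by rewrite exprn_even_gt0.
exists (Num.min d ((xy K.+1).2 ^+ 2)); split; first by rewrite lt_min dpos.
move=> j /andP [j0 jK]; rewrite leq_eqVlt in jK; case/orP: jK => [/eqP ->|jK].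
  have hm : Num.min d ((xy K.+1).2 ^+ 2) <= (xy K.+1).2 ^+ 2 by rewrite ge_min lexx orbT.
  have := xy_norm K.+1; lra.
have := hd j; rewrite j0 -ltnS jK => /(_ isT) h.
have hm : Num.min d ((xy K.+1).2 ^+ 2) <= d by rewrite ge_min lexx.
lra.
Qed.


Lemma inf_le0 (f : nat -> R) : (forall i, 0 <= f i) -> inf (range f) <= f 0%N.
Proof.
move=> h; apply: ge_inf; last by exists 0%N.
by exists 0 => _ [i _ <-].
Qed.

Lemma inf_ge (f : nat -> R) c : (forall i, c <= f i) -> c <= inf (range f).
Proof.
move=> h; apply: lb_le_inf; first by exists (f 0%N), 0%N.
by move=> _ [i _ <-].
Qed.

Section FD.
Variables (Sigma : finType) (A : qautomaton R Sigma).

Lemma fD_ub w c :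
  (exists psi : 'cV_(qa_dim A), sqnorm psi = 1 /\ inF psi) ->
  (forall psi ns, sqnorm psi = 1 -> inF psi -> strict_incr ns ->
     sqmod (inner psi (drun (A:=A) w psi ns (ns 0%N))) <= c) ->
  fD A w <= c.
Proof.
move=> [psi0 [h0 h0']] H; apply: ge_sup.
  exists (inf (range (fun i => sqmod (inner psi0 (drun (A:=A) w psi0 id i))))).
  by exists psi0, id; split => // i.
move=> x [psi [ns [h1 h2 h3 ->]]].
apply: le_trans (inf_le0 _) (H _ _ h1 h2 h3) => i; exact: sqmod_ge0.
Qed.

Lemma fD_lb w psi ns c : sqnorm psi = 1 -> inF psi -> strict_incr ns ->
  (forall i, c <= sqmod (inner psi (drun (A:=A) w psi ns (ns i)))) ->
  c <= fD A w.
Proof.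
move=> h1 h2 h3 H.
apply: (@le_trans _ _ (inf (range (fun i => sqmod (inner psi (drun (A:=A) w psi ns (ns i))))))).
  exact: inf_ge.
apply: ub_le_sup; last by exists psi, ns.
exists (2 ^+ qa_dim A * (qa_dim A)%:R) => x [psi' [ns' [h1' h2' h3' ->]]].
apply: le_trans (inf_le0 _) _ => [i|]; first exact: sqmod_ge0.
by apply: inner_bound => //; apply: drun_unit.
Qed.

End FD.

Lemma run_Aut_const k : run Aut (fun _ => true) k = stv k.+1.
Proof. by elim: k => [|k IH] /=; rewrite ?s0A_stv // IH Rm_stv. Qed.

Lemma run_Aut_w' n0 k : run Aut (fun t => (t < n0)%N) k = stv (minn k n0).+1.
Proof.
elim: k => [|k IH] /=; first by rewrite min0n s0A_stv.
rewrite IH; case: (ltnP k n0) => h /=.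
  by rewrite Rm_stv (minn_idPl h).
by rewrite mul1mx (minn_idPr (leq_trans h (leqnSn k))).
Qed.

Lemma fD_Aut_one : fD Aut (fun _ => true) = 1.
Proof.
have ub : fD Aut (fun _ => true) <= 1.
  apply: fD_ub; first by exists e1; split; [exact: e1_unit | exact: inF_e1].
  move=> psi ns h1 h2 h3; rewrite fid_Aut //.
  have := sqmod_le_sqnorm (drun (A:=Aut) (fun _ => true) psi ns (ns 0%N)) ord0.
  by rewrite drun_unit.
have lb : forall eps, 0 < eps -> 1 - eps <= fD Aut (fun _ => true).
  move=> eps epos.
  have [m [m0 hm]] := dirichlet Rm_unitary e1_unit epos.
  apply: (@fD_lb _ Aut _ e1 (fun i => (m.-1 + m * i)%N)) => //.
  - exact: e1_unit.
  - exact: inF_e1.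
  - exact: strict_incr_lin.
  case=> [|i].
    rewrite muln0 addn0 drun_pre; last by move=> i; rewrite leq_addr.
    by rewrite run_Aut_const prednK // -iter_stv.
  have -> : (m.-1 + m * i.+1 = m.-1 + m * i + m)%N by rewrite mulnS; lia.
  rewrite (@drun_block _ Aut _ _ _ _ true) //; last by rewrite m0 leqnn.
apply/eqP; rewrite eq_le ub /=.
rewrite leNgt; apply/negP => hlt.
have := lb ((1 - fD Aut (fun _ => true)) / 2).
rewrite divr_gt0 ?subr_gt0 // => /(_ isT); lra.
Qed.

Lemma fD_Aut_w' n0 : fD Aut (fun t => (t < n0)%N) < 1.
Proof.
have [d [dpos hd]] := xy_bound n0.+1.
apply: (@le_lt_trans _ _ (1 - d)); last by lra.
apply: fD_ub; first by exists e1; split; [exact: e1_unit | exact: inF_e1].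
move=> psi ns h1 h2 h3; rewrite fid_Aut //.
rewrite drun_pre; last exact: strict_incr_ge.
rewrite run_Aut_w' !mxE eqxx sqmodR; apply: (hd (minn (ns 0%N) n0).+1).
by rewrite /= ltnS geq_minr.
Qed.

End Aux.

Local Close Scope complex_scope.

Theorem theorem6 (R : realType) (lam : R) (hlam : 0 <= lam < 1) :
  exists (Sigma : finType) (A : qautomaton R Sigma),
    forall B : qautomaton R Sigma, lang_eq1 A <> lang_gt lam B.
Proof.
exists bool, (Aut R) => B H.
move: hlam => /andP [l0 l1].
have win : lang_gt lam B (fun _ => true) by rewrite -H; exact: fD_Aut_one.
have win' : lam < fD B (fun _ => true) := win.
move: win'; rewrite /fD; set S := (X in sup X) => win'.
have ne : S !=set0.
  apply: contrapT => ne0.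
  have S0 : S = set0 by apply/seteqP; split => x // Sx; apply: ne0; exists x.
  by move: win'; rewrite S0 sup0 => h; move: (lt_le_trans h l0); rewrite ltxx.
have [x [psi [ns [hpsi hF hns ->]]] hx] := sup_gt ne win'.
set n0 := ns 0%N.
have hf0 : lam < sqmod (inner psi (run B (fun _ => true) n0)).
  rewrite -(@drun_pre R bool B (fun _ => true) psi ns); last exact: strict_incr_ge.
  apply: lt_le_trans hx (inf_le0 _) => i; exact: sqmod_ge0.
have dpos : 0 < (1 - lam) / 2 by rewrite divr_gt0 // subr_gt0.
have [m [m0 hm]] := dirichlet (qa_U_unitary B false) hpsi dpos.
pose w' := fun t => (t < n0)%N.
have lt' : lam < fD B w'.
  set q := sqmod (inner psi (iter m (mulmx (qa_U B false)) psi)).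
  set f0 := sqmod (inner psi (run B (fun _ => true) n0)).
  have hq : lam < q.
    apply: lt_le_trans hm; clear -l1; lra.
  apply: (@lt_le_trans _ _ (Num.min f0 q)); first by rewrite lt_min hf0 hq.
  apply: (@fD_lb R bool B w' psi (fun i => n0 + m * i)%N) => //.
    exact: strict_incr_lin.
  case=> [|i].
    rewrite muln0 addn0 drun_pre; last by move=> i; rewrite leq_addr.
    rewrite (@run_ext R bool B w' (fun _ => true)); first by rewrite ge_min lexx.
    by move=> t ht; rewrite /w' ht.
  have -> : (n0 + m * i.+1 = n0 + m * i + m)%N by rewrite mulnS; lia.
  rewrite (@drun_block R bool B _ _ _ _ false) //; first by rewrite ge_min lexx orbT.
    by move=> k hk; rewrite /w' ltnNge hk.
  by rewrite m0 leqnn.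
have : lang_gt lam B w' := lt'.
rewrite -H => h1.
have := fD_Aut_w' R n0.
by rewrite [fD _ _]h1 ltxx.
Qed.
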